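(* Assume: (i) the observed data $(x,y)$ follow the IMCA model with parameters $(h,T,\lambda,\mu)$; (ii) the mixing function $h:\mathbb{R}^d\to\mathbb{R}^d$ is invertible; (iii) each $T_i$ is differentiable and satisfies the strong exponential condition; (iv) there exist $k+1$ distinct points $y^0,\dots,y^k$ such that the $k\times k$ matrix $L=\big(\lambda(y^1)-\lambda(y^0),\dots,\lambda(y^k)-\lambda(y^0)\big)$ is invertible; (v) there are a differentiable $f:\mathbb{R}^d\to\mathbb{R}^d$, differentiable functions $H_l:\mathbb{R}\to\mathbb{R}^{m_l}$ ($l=1,\dots,d$) where $(m_1,\dots,m_d)$ is a permutation of $(k_1,\dots,k_d)$, and $g:\mathcal{Y}\to\mathbb{R}^k$ such that, with $H(f(x))=(H_1(f_1(x)),\dots,H_d(f_d(x)))\in\mathbb{R}^k$, the model $p_{f,g}(x\mid y)=\exp(-H(f(x))^\top g(y))/Z(y)$ satisfies $p_{f,g}(x\mid y)=p(x\mid y)$ for all $x,y$. Then there exist an invertible $k\times k$ matrix $A$ and a vector $b\in\mathbb{R}^k$ such that $H(f(x))=A\,T(z)+b$ for all $x$, where $z=h^{-1}(x)$.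
   Context: IMCA model: a latent $z\in\mathbb{R}^d$ and an observed auxiliary variable $y\in\mathcal{Y}\subset\mathbb{R}^{d_y}$, with $z\sim p(z\mid y)$ and observation $x=h(z)$, where $p(z\mid y)=\mu(z)\exp\big(\sum_{i=1}^d T_i(z_i)^\top\lambda_i(y)-\Gamma(y)\big)$; here $\mu$ is an arbitrary (not necessarily factorized) base measure density, $T_i:\mathbb{R}\to\mathbb{R}^{k_i}$ are sufficient statistics, $\lambda_i:\mathcal{Y}\to\mathbb{R}^{k_i}$, $\Gamma(y)$ is the log-normalizer, $k=\sum_i k_i$, $T=(T_1,\dots,T_d)$, $\lambda=(\lambda_1,\dots,\lambda_d)$ stacked into $\mathbb{R}^k$. The strong exponential condition for $T_i$: for every measurable $U\subset\mathbb{R}$ and every $\eta\in\mathbb{R}^{k_i}$, if $u\mapsto T_i(u)^\top\eta$ is constant on $U$, then $U$ has Lebesgue measure zero or $\eta=0$. *)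

(* Defs.v *)
From Stdlib Require Import Reals.
From HB Require Import structures.
From mathcomp Require Import all_boot all_fingroup.

Set Implicit Arguments.
Unset Strict Implicit.
Unset Printing Implicit Defensive.
Local Open Scope R_scope.

Definition Rsum (I : finType) (F : I -> R) : R := \big[Rplus/R0]_(i : I) F i.

Definition kdelta (I : eqType) (i j : I) : R := if i == j then R1 else R0.

Definition mx_invertible (I J : finType) (A : I -> J -> R) : Prop :=
  exists B : J -> I -> R,
    (forall i i' : I, Rsum (fun j => A i j * B j i') = kdelta i i') /\
    (forall j j' : J, Rsum (fun i => B j i * A i j') = kdelta j j').

Definition vec (n : nat) := 'I_n -> R.
Definition vadd n (u v : vec n) : vec n := fun i => u i + v i.
Definition vsub n (u v : vec n) : vec n := fun i => u i - v i.
(* l1 norm (all norms on R^n are equivalent) *)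
Definition vnorm n (u : vec n) : R := Rsum (fun i => Rabs (u i)).

Definition differentiable_vec (n m : nat) (F : vec n -> vec m) : Prop :=
  forall x : vec n, exists D : 'I_m -> 'I_n -> R,
    forall eps : R, 0 < eps -> exists delta : R, 0 < delta /\
      forall hh : vec n, vnorm hh < delta ->
        vnorm (fun i => F (vadd x hh) i - F x i - Rsum (fun j => D i j * hh j))
          <= eps * vnorm hh.

Definition outer_lt (E : R -> Prop) (eps : R) : Prop :=
  exists a b : nat -> R,
    (forall n, a n <= b n) /\
    (forall x, E x -> exists n, a n < x < b n) /\
    exists r, r < eps /\ forall N, sum_f_R0 (fun n => b n - a n) N <= r.

Definition lebesgue_null (E : R -> Prop) : Prop :=
  forall eps, 0 < eps -> outer_lt E eps.

Definition open_set (G : R -> Prop) : Prop :=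
  forall x, G x -> exists delta, 0 < delta /\
    forall y, Rabs (y - x) < delta -> G y.

Definition lebesgue_measurable (U : R -> Prop) : Prop :=
  forall eps, 0 < eps -> exists G, open_set G /\ (forall x, U x -> G x) /\
    outer_lt (fun x => G x /\ ~ U x) eps.

Definition strong_exponential (ki : nat) (T : R -> vec ki) : Prop :=
  forall U : R -> Prop, lebesgue_measurable U ->
  forall eta : vec ki,
    (exists c, forall u, U u -> Rsum (fun j => T u j * eta j) = c) ->
    lebesgue_null U \/ (forall j, eta j = 0).

Definition differentiable_R_vec (m : nat) (F : R -> vec m) : Prop :=
  forall (j : 'I_m) (x : R), exists l : R, derivable_pt_lim (fun u => F u j) x l.

(* Index set of R^k = R^{k_1} x ... x R^{k_d}: pairs (i, j) with j < k_i. *)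
Definition blk (d : nat) (ks : 'I_d -> nat) : finType := {i : 'I_d & 'I_(ks i)}.

Definition stackT (d : nat) (ks : 'I_d -> nat)
  (T : forall i : 'I_d, R -> vec (ks i)) (z : vec d) : blk ks -> R :=
  fun p => T (tag p) (z (tag p)) (tagged p).

Definition stackL (d : nat) (ks : 'I_d -> nat) (Y : Type)
  (lam : forall i : 'I_d, Y -> vec (ks i)) (y : Y) : blk ks -> R :=
  fun p => lam (tag p) y (tagged p).

Definition imca_density (d : nat) (ks : 'I_d -> nat) (Y : Type)
  (mu : vec d -> R) (T : forall i : 'I_d, R -> vec (ks i))
  (lam : forall i : 'I_d, Y -> vec (ks i)) (Gam : Y -> R)
  (z : vec d) (y : Y) : R :=
  mu z * exp (Rsum (fun p => stackT T z p * stackL lam y p) - Gam y).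

(* Main.v *)
Require Import Defs.
From Stdlib Require Import Reals.
From HB Require Import structures.
From mathcomp Require Import all_boot all_fingroup.
From Stdlib Require Import Lra Lia Classical.
From mathcomp Require Import all_algebra.
From mathcomp Require Import Rstruct.
Import GRing.Theory.
Set Warnings "-notation-overridden -ambiguous-paths".
Local Open Scope R_scope.

Lemma sum_mono_N (f : nat -> R) (N k : nat) :
  (forall n, 0 <= f n) -> sum_f_R0 f N <= sum_f_R0 f (N + k)%coq_nat.
Proof.
intros Hf; induction k as [|k IH]; [rewrite Nat.add_0_r; lra|].
rewrite Nat.add_succ_r; simpl; specialize (Hf (S (N + k)%coq_nat)); lra.
Qed.

Lemma sum_ge_term (f : nat -> R) (N m : nat) :
  (forall n, 0 <= f n) -> (m <= N)%coq_nat -> f m <= sum_f_R0 f N.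
Proof.
intros Hf; induction N as [|N IH]; intros Hm.
- assert (m = 0%nat) by lia; subst; simpl; lra.
- destruct (Nat.eq_dec m (S N)) as [->|Hne]; simpl.
  + pose proof (cond_pos_sum f N Hf); lra.
  + assert (m <= N)%coq_nat by lia; specialize (IH H); specialize (Hf (S N)); lra.
Qed.

Lemma R_not_null : ~ lebesgue_null (fun _ => True).
Proof.
intros Hnull.
destruct (Hnull 1 Rlt_0_1) as (a & b & Hab & Hcov & r & Hr & Hsum).
set (l := fun x n => Rmax 0 (Rmin (b n) x - a n)).
assert (Hl0 : forall x n, 0 <= l x n) by (intros; apply Rmax_l).
assert (Hlb : forall x n, l x n <= b n - a n).
{ intros x n; unfold l; apply Rmax_lub; [specialize (Hab n); lra|].
  pose proof (Rmin_l (b n) x); lra. }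
assert (Hlmono : forall x y n, x <= y -> l x n <= l y n).
{ intros x y n Hxy; unfold l; apply Rmax_lub; [apply Rmax_l|].
  eapply Rle_trans; [|apply Rmax_r].
  assert (Rmin (b n) x <= Rmin (b n) y); [|lra].
  apply Rmin_glb; [apply Rmin_l|]. pose proof (Rmin_r (b n) x); lra. }
set (P := fun x => 0 <= x <= 1 /\ exists N, x <= sum_f_R0 (l x) N).
assert (P1 : P 1).
{ assert (Hbd : bound P) by (exists 1; intros x [Hx _]; lra).
  assert (Hne : exists x, P x).
  { exists 0; split; [lra|]; exists 0%nat; apply cond_pos_sum; auto. }
  destruct (completeness P Hbd Hne) as [s [Hub Hlub]].
  assert (Hs0 : 0 <= s) by (apply Hub; split; [lra|exists 0%nat; apply cond_pos_sum; auto]).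
  assert (Hs1 : s <= 1) by (apply Hlub; intros x [Hx _]; lra).
  destruct (Hcov s I) as [m Hm].
  assert (Hx : exists x, P x /\ a m < x).
  { apply NNPP; intros Hn.
    assert (s <= a m); [|lra].
    apply Hlub; intros x Px; apply Rnot_lt_le; intros Hlt; apply Hn; eauto. }
  destruct Hx as [x [[Hx01 [N HN]] Hax]].
  assert (Hxs : x <= s) by (apply Hub; split; [auto|exists N; auto]).
  set (y := Rmin 1 ((s + b m) / 2)).
  assert (Hy1 : y <= 1) by apply Rmin_l.
  assert (Hyb : y <= b m) by (pose proof (Rmin_r 1 ((s + b m) / 2)); unfold y; lra).
  assert (Hxy : x <= y).
  { unfold y; apply Rmin_glb; lra. }
  assert (Py : P y).
  { split; [lra|].
    exists (N + m)%coq_nat.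
    assert (E1 : sum_f_R0 (l x) N <= sum_f_R0 (l x) (N + m)%coq_nat) by (apply sum_mono_N; auto).
    assert (E2 : l y m - l x m <= sum_f_R0 (fun n => l y n - l x n) (N + m)%coq_nat).
    { apply (sum_ge_term (fun n => l y n - l x n)); [|lia].
      intros n; specialize (Hlmono x y n Hxy); lra. }
    rewrite (minus_sum (l y) (l x)) in E2.
    assert (E3 : l y m - l x m = y - x).
    { unfold l. rewrite (Rmin_right (b m) y Hyb). rewrite (Rmin_right (b m) x); [|lra].
      rewrite (Rmax_right 0 (y - a m)); [|lra]. rewrite (Rmax_right 0 (x - a m)); [|lra]. lra. }
    lra. }
  assert (Hys : y <= s) by (apply Hub; auto).
  destruct (Rle_lt_or_eq_dec y 1 Hy1) as [Hlt|Heq]; [|rewrite -Heq; auto].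
  exfalso. unfold y in Hlt, Hys.
  destruct (Rle_dec 1 ((s + b m) / 2)) as [Hc|Hc].
  - rewrite Rmin_left in Hlt; lra.
  - rewrite Rmin_right in Hys; lra. }
destruct P1 as [_ [N HN]].
assert (sum_f_R0 (l 1) N <= sum_f_R0 (fun n => b n - a n) N) by (apply sum_Rle; auto).
specialize (Hsum N); lra.
Qed.


Lemma logeq (a V Z m J : R) : 0 < Z -> 0 <= m -> 0 < J ->
  exp (- a) / Z = m * exp V * J -> a + V = - ln Z - ln m - ln J.
Proof.
intros HZ Hm HJ E.
assert (Hl : 0 < exp (- a) / Z) by (apply Rdiv_lt_0_compat; [apply exp_pos|auto]).
assert (Hm' : 0 < m).
{ destruct Hm as [Hm|Hm]; auto. rewrite <- Hm in E. rewrite E in Hl. lra. }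
assert (E2 : ln (exp (- a) / Z) = ln (m * exp V * J)) by (rewrite E; auto).
unfold Rdiv in E2.
rewrite ln_mult in E2; [|apply exp_pos|apply Rinv_0_lt_compat; auto].
rewrite ln_Rinv in E2; [|auto].
have He := exp_pos V.
rewrite ln_mult in E2; [|apply Rmult_lt_0_compat; auto|auto].
rewrite ln_mult in E2; [|auto|auto].
rewrite !ln_exp in E2. lra.
Qed.

Lemma measurable_True : lebesgue_measurable (fun _ => True).
Proof.
intros eps Heps. exists (fun _ => True). split; [|split].
- intros x _; exists 1; split; [lra|auto].
- auto.
- exists (fun _ => 0), (fun _ => 0). split; [intros; lra|split].
  + intros x [_ H]; tauto.
  + exists 0; split; [auto|]. intros N; induction N; simpl; lra.
Qed.

Lemma sum_sig (d : nat) (ks : 'I_d -> nat) (F : blk ks -> R) :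
  Rsum F = Rsum (fun i : 'I_d => Rsum (fun j : 'I_(ks i) => F (Tagged (fun i => 'I_(ks i)) j))).
Proof.
rewrite /Rsum; symmetry.
rewrite (sig_big_dep (op := Rplus) (idx := R0) predT (fun _ => predT)
   (fun i j => F (Tagged (fun i => 'I_(ks i)) j))).
by apply: eq_big => // -[i j].
Qed.

Section RingPart.
Lemma RsumE (I : finType) (F : I -> R) : Rsum F = (\sum_(i : I) F i)%R.
Proof. reflexivity. Qed.

Lemma Rsum_ext (I : finType) (F G : I -> R) : (forall i, F i = G i) -> Rsum F = Rsum G.
Proof. by move=> H; rewrite !RsumE; apply: eq_bigr => i _; apply: H. Qed.

Lemma Rsum_minus (I : finType) (F G : I -> R) :
  Rsum (fun i => Rminus (F i) (G i)) = Rminus (Rsum F) (Rsum G).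
Proof. rewrite !RsumE; exact: sumrB. Qed.

Lemma kdelta_sym (I : eqType) (i j : I) : kdelta i j = kdelta j i.
Proof. by rewrite /kdelta eq_sym. Qed.

Local Open Scope ring_scope.

Lemma sum_kdelta (I : finType) (F : I -> R) (i0 : I) :
  \sum_(i : I) F i * kdelta i i0 = F i0.
Proof.
rewrite (bigD1 i0) //= /kdelta eqxx big1 ?addr0 ?mulr1 // => i /negbTE ->.
by rewrite mulr0.
Qed.

Lemma sum_reindex (I : finType) n (e : #|I| = n) (F : I -> R) :
  \sum_(i : I) F i = \sum_(k < n) F (enum_val (cast_ord (esym e) k)).
Proof.
subst n; rewrite (reindex (fun k : 'I_#|I| => enum_val (cast_ord (esym erefl) k))) //=.
exists (fun i => enum_rank i) => [k _|i _]; first by rewrite enum_valK; apply: val_inj.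
by rewrite cast_ord_id enum_rankK.
Qed.

Lemma key_inv (I J : finType) (C : I -> J -> R) (e : #|J| = #|I|)
  (Hinj : forall eta : J -> R, (forall i, Rsum (fun j => C i j * eta j) = 0) -> forall j, eta j = 0) :
  mx_invertible C.
Proof.
set n := #|I|.
pose fI (k : 'I_n) : I := enum_val k.
pose fJ (k : 'I_n) : J := enum_val (cast_ord (esym e) k).
pose gI (i : I) : 'I_n := enum_rank i.
pose gJ (j : J) : 'I_n := cast_ord e (enum_rank j).
have fIK : forall i, fI (gI i) = i by move=> i; rewrite /fI /gI enum_rankK.
have fJK : forall j, fJ (gJ j) = j by move=> j; rewrite /fJ /gJ cast_ordK enum_rankK.
have gIK : forall k, gI (fI k) = k by move=> k; rewrite /fI /gI enum_valK.
have gJK : forall k, gJ (fJ k) = k by move=> k; rewrite /fJ /gJ enum_valK cast_ordKV.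
pose Cm : 'M[R]_n := \matrix_(a, b) C (fI a) (fJ b).
have sumJ : forall F : J -> R, \sum_(j : J) F j = \sum_(k < n) F (fJ k).
  by move=> F; apply: sum_reindex.
have sumI : forall F : I -> R, \sum_(i : I) F i = \sum_(k < n) F (fI k).
  move=> F; rewrite (@sum_reindex I n (erefl n)); apply: eq_bigr => k _.
  by rewrite /fI; congr (F (enum_val _)); apply: val_inj.
have unitC : Cm \in unitmx.
  rewrite unitmxE unitfE -det_tr; apply/negP => /det0P [v vnz vC].
  move/negP: vnz; apply; apply/eqP/rowP => b; rewrite mxE.
  have := Hinj (fun j => v 0 (gJ j)) _ (fJ b); rewrite gJK; apply.
  move=> i; rewrite RsumE sumJ.
  have := congr1 (fun M : 'M[R]_(1,n) => M 0 (gI i)) vC; rewrite !mxE.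
  move=> H; rewrite -[RHS]H; apply: eq_bigr => k _; rewrite !mxE fIK gJK mulrC //.
pose Dm := invmx Cm.
exists (fun j i => Dm (gJ j) (gI i)); split.
- move=> i i'; rewrite RsumE sumJ.
  have := congr1 (fun M : 'M[R]_n => M (gI i) (gI i')) (mulmxV unitC).
  rewrite !mxE => H.
  transitivity (\sum_j Cm (gI i) j * invmx Cm j (gI i')).
    by apply: eq_bigr => k _; rewrite !mxE fIK gJK.
  rewrite H (inj_eq (can_inj fIK)) /kdelta; by case: (i == i').
- move=> j j'; rewrite RsumE sumI.
  have := congr1 (fun M : 'M[R]_n => M (gJ j) (gJ j')) (mulVmx unitC).
  rewrite !mxE => H.
  transitivity (\sum_k invmx Cm (gJ j) k * Cm k (gJ j')).
    by apply: eq_bigr => k _; rewrite !mxE fJK gIK.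
  rewrite H (inj_eq (can_inj fJK)) /kdelta; by case: (j == j').
Qed.

Lemma algebra_core (X : Type) (K M : finType) (n : nat)
  (L : K -> 'I_n -> R) (B : 'I_n -> K -> R)
  (HB : forall p p', Rsum (fun t => L p t * B t p') = kdelta p p')
  (G : M -> 'I_n -> R) (c : 'I_n -> R) (tau : X -> K -> R) (phi : X -> M -> R)
  (Hrel : forall x t, Rsum (fun p => tau x p * L p t) = c t - Rsum (fun q => phi x q * G q t))
  (Hnd : forall eta : K -> R, (exists c0, forall x, Rsum (fun p => tau x p * eta p) = c0) ->
           forall p, eta p = 0)
  (Hcard : #|K| = #|M|) :
  exists (A : M -> K -> R) (b : M -> R), mx_invertible A /\
    forall x q, phi x q = Rsum (fun p => A q p * tau x p) + b q.
Proof.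
pose C q p := - \sum_t G q t * B t p.
pose e p := \sum_t c t * B t p.
have Htau : forall x p, tau x p = \sum_q phi x q * C q p + e p.
  move=> x p.
  rewrite -[LHS](@sum_kdelta _ (tau x) p).
  under eq_bigr => p' _ do rewrite -HB RsumE mulr_sumr.
  rewrite exchange_big /=.
  under eq_bigr => t _ do (under eq_bigr => p' _ do rewrite mulrA; rewrite -mulr_suml -RsumE Hrel).
  rewrite /e /C.
  under eq_bigr => t _ do rewrite mulrBl RsumE mulr_suml.
  rewrite sumrB addrC; congr (_ + _).
  rewrite exchange_big /= -sumrN; apply: eq_bigr => q _.
  by rewrite mulrN mulr_sumr; congr (- _); apply: eq_bigr => t _; rewrite mulrA.
have HndC : forall eta : K -> R, (forall q, Rsum (fun p => C q p * eta p) = 0) -> forall p, eta p = 0.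
  move=> eta Heta; apply: Hnd; exists (\sum_p e p * eta p) => x.
  rewrite RsumE.
  under eq_bigr => p _ do rewrite Htau mulrDl mulr_suml.
  rewrite big_split /= exchange_big /= big1 ?add0r // => q _.
  under eq_bigr => p _ do rewrite -mulrA.
  by rewrite -mulr_sumr -RsumE Heta mulr0.
have [D [HD1 HD2]] := @key_inv M K C Hcard HndC.
exists (fun q p => D p q), (fun q => - \sum_p e p * D p q); split.
  exists (fun p q => C q p); split.
    move=> q q'; rewrite kdelta_sym -HD1; apply: Rsum_ext => p; apply: Rmult_comm.
  move=> p p'; rewrite kdelta_sym -HD2; apply: Rsum_ext => q; apply: Rmult_comm.
move=> x q'.
rewrite -[LHS](@sum_kdelta _ (phi x) q').
under eq_bigr => q _ do rewrite -HD1 RsumE mulr_sumr.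
rewrite exchange_big /= RsumE -sumrN -big_split /=.
apply: eq_bigr => p _.
under eq_bigr => q _ do rewrite mulrA.
rewrite -mulr_suml.
have -> : \sum_q phi x q * C q p = tau x p - e p by rewrite Htau addrK.
by rewrite mulrBl [tau x p * _]mulrC.
Qed.

End RingPart.

Theorem mainTheorem8
  (* dimensions: latent/observed dim d, auxiliary dim d_y, sufficient-statistic dims k_i *)
  (d dy : nat) (Ymem : vec dy -> Prop) (ks : 'I_d -> nat)
  (* (i) IMCA model with parameters (h, T, lambda, mu) *)
  (h : vec d -> vec d)
  (T : forall i : 'I_d, R -> vec (ks i))
  (lam : forall i : 'I_d, vec dy -> vec (ks i))
  (mu : vec d -> R) (Gam : vec dy -> R)
  (Hmu : forall z, 0 <= mu z)
  (* change-of-variables factor of the density of x = h(z) (|det J_{h^-1}(x)|) *)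
  (Jac : vec d -> R) (HJac : forall x, 0 < Jac x)
  (* (ii) h is invertible, with inverse hinv *)
  (hinv : vec d -> vec d)
  (Hh1 : forall x, h (hinv x) = x) (Hh2 : forall z, hinv (h z) = z)
  (* (iii) each T_i differentiable and strongly exponential *)
  (HTd : forall i, differentiable_R_vec (T i))
  (HTs : forall i, strong_exponential (T i))
  (* (iv) k+1 distinct points y^0..y^k of Y with L invertible *)
  (ys : 'I_(#|blk ks|).+1 -> vec dy)
  (Hys : forall t, Ymem (ys t)) (Hyinj : injective ys)
  (HL : mx_invertible (fun (p : blk ks) (t : 'I_#|blk ks|) =>
           stackL lam (ys (lift ord0 t)) p - stackL lam (ys ord0) p))
  (* (v) the learned model (f, H, g) *)
  (f : vec d -> vec d) (Hf : differentiable_vec f)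
  (ms : 'I_d -> nat) (sigma : {perm 'I_d}) (Hms : forall l, ms l = ks (sigma l))
  (H : forall l : 'I_d, R -> vec (ms l))
  (HHd : forall l, differentiable_R_vec (H l))
  (g : vec dy -> blk ms -> R) (Z : vec dy -> R)
  (HZ : forall y, Ymem y -> 0 < Z y)
  (Heq : forall (x : vec d) (y : vec dy), Ymem y ->
     exp (- Rsum (fun q => stackT H (f x) q * g y q)) / Z y
     = imca_density mu T lam Gam (hinv x) y * Jac x) :
  exists (A : blk ms -> blk ks -> R) (b : blk ms -> R),
    mx_invertible A /\
    forall (x : vec d) (q : blk ms),
      stackT H (f x) q = Rsum (fun p => A q p * stackT T (hinv x) p) + b q.

Proof.
have Hcard : #|blk ks| = #|blk ms|.
  rewrite /blk !order.tagnat.card.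
  rewrite [RHS](eq_bigr (fun i => ks (sigma i))); last by move=> i _; rewrite Hms.
  exact: (reindex_inj (@perm_inj _ sigma)).
have HTnd : forall eta : blk ks -> R,
    (exists c0, forall x, Rsum (fun p => (stackT T (hinv x) p * eta p)%R) = c0) ->
    forall p, eta p = 0.
  move=> eta [c0 Hc0] [i j].
  pose z (u : R) : vec d := fun i' => if i' == i then u else 0.
  pose S (i' : 'I_d) (u : R) :=
    Rsum (fun j : 'I_(ks i') => T i' u j * eta (Tagged (fun i => 'I_(ks i)) j)).
  have Hz : forall u, S i u + \big[Rplus/R0]_(i' | i' != i) S i' 0 = c0.
    move=> u; rewrite -(Hc0 (h (z u))) Hh2 sum_sig /Rsum [RHS](bigD1 i) //=.
    congr (_ + _).
      by apply: eq_bigr => k _; rewrite /stackT /z /= eqxx.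
    apply: eq_bigr => i' /negbTE Hi; apply: eq_bigr => k _.
    by rewrite /stackT /z /= Hi.
  have Hconst : exists c, forall u, True ->
      Rsum (fun j => T i u j * eta (Tagged (fun i => 'I_(ks i)) j)) = c.
    exists (c0 - \big[Rplus/R0]_(i' | i' != i) S i' 0) => u _.
    rewrite -(Hz u); change (S i u = S i u + \big[Rplus/R0]_(i' | i' != i) S i' 0 - \big[Rplus/R0]_(i' | i' != i) S i' 0); ring.
  have [Hnull|Hzero] := HTs i (fun _ => True) measurable_True
     (fun j => eta (Tagged (fun i => 'I_(ks i)) j)) Hconst.
  - by case: (R_not_null Hnull).
  - exact: Hzero.
have [Binv [HB _]] := HL.
pose L p t := stackL lam (ys (lift ord0 t)) p - stackL lam (ys ord0) p.
pose G (q : blk ms) (t : 'I_#|blk ks|) := g (ys (lift ord0 t)) q - g (ys ord0) q.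
pose c (t : 'I_#|blk ks|) := Gam (ys (lift ord0 t)) - Gam (ys ord0)
   - ln (Z (ys (lift ord0 t))) + ln (Z (ys ord0)).
have Hlog : forall x y, Ymem y ->
   Rsum (fun q => stackT H (f x) q * g y q)
   + (Rsum (fun p => stackT T (hinv x) p * stackL lam y p) - Gam y)
   = - ln (Z y) - ln (mu (hinv x)) - ln (Jac x).
  move=> x y Hy; apply: logeq; [apply: HZ; exact: Hy|apply: Hmu|apply: HJac|].
  exact: (Heq x y Hy).
have Hrel : forall x t, Rsum (fun p => stackT T (hinv x) p * L p t)
    = c t - Rsum (fun q => stackT H (f x) q * G q t).
  move=> x t.
  have E1 := Hlog x _ (Hys (lift ord0 t)); have E2 := Hlog x _ (Hys ord0).
  rewrite (@Rsum_ext _ (fun p => stackT T (hinv x) p * L p t)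
    (fun p => stackT T (hinv x) p * stackL lam (ys (lift ord0 t)) p
              - stackT T (hinv x) p * stackL lam (ys ord0) p)); last first.
    by move=> p; rewrite /L; ring.
  rewrite (@Rsum_ext _ (fun q => stackT H (f x) q * G q t)
    (fun q => stackT H (f x) q * g (ys (lift ord0 t)) q
              - stackT H (f x) q * g (ys ord0) q)); last first.
    by move=> q; rewrite /G; ring.
  rewrite !Rsum_minus /c; lra.
exact (@algebra_core (vec d) (blk ks) (blk ms) #|blk ks| L Binv HB G c
  (fun x => stackT T (hinv x)) (fun x => stackT H (f x)) Hrel HTnd Hcard).
Qed.
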